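(* Let $k'_X$ be a kernel on a set $\mathcal{X}$ with $\sup_xk'_X(x,x)\le B_{k'}^2$, let $\mathfrak{K}$ be a kernel on $\mathcal{H}_{k'_X}$ with canonical feature map $\Phi_{\mathfrak{K}}$, and let $\mathcal{B}$ be the closed ball of radius $B_{k'}$ in $\mathcal{H}_{k'_X}$. Assume that for any $u,v\in\mathcal{B}$ and unit-norm vector $e\in\mathcal{H}_{k'_X}$, the function $h_{u,v,e}:(\lambda,\mu)\in\mathbb{R}^2\mapsto\mathfrak{K}(u+\lambda e,v+\mu e)$ admits a mixed partial derivative $\partial_1\partial_2h_{u,v,e}$ at $(0,0)$ which is bounded in absolute value by a constant $C_{\mathfrak{K}}^2$ independent of $(u,v,e)$. Then $\|\Phi_{\mathfrak{K}}(u)-\Phi_{\mathfrak{K}}(v)\|\le C_{\mathfrak{K}}\|u-v\|$ for all $u,v\in\mathcal{B}$.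
   Context: The canonical feature map of $\mathfrak{K}$ is $\Phi_{\mathfrak{K}}(v)=\mathfrak{K}(v,\cdot)\in\mathcal{H}_{\mathfrak{K}}$, the RKHS of $\mathfrak{K}$. *)

(* Defs.v *)
From HB Require Import structures.
From mathcomp Require Import all_boot all_order all_algebra.
From mathcomp Require Import all_classical all_reals all_analysis.
Set Implicit Arguments. Unset Strict Implicit. Unset Printing Implicit Defensive.
Import Order.TTheory GRing.Theory Num.Theory.
Import numFieldNormedType.Exports.
Local Open Scope classical_set_scope.
Local Open Scope ring_scope.

Definition is_kernel (R : realType) (T : Type) (k : T -> T -> R) : Prop :=
  (forall x y, k x y = k y x) /\
  (forall (n : nat) (c : 'I_n -> R) (x : 'I_n -> T),
      0 <= \sum_(i < n) \sum_(j < n) c i * c j * k (x i) (x j)).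

Definition inner_product (R : realType) (V : normedModType R)
  (ip : V -> V -> R) : Prop :=
  (forall x y, ip x y = ip y x) /\
  (forall (a : R) (x y z : V), ip (a *: x + y) z = a * ip x z + ip y z) /\
  (forall x, ip x x = `|x| ^+ 2).

Definition feature_span (R : realType) (V : lmodType R) (T : Type)
  (phi : T -> V) : set V :=
  [set y | exists (n : nat) (c : 'I_n -> R) (x : 'I_n -> T),
      y = \sum_(i < n) c i *: phi (x i)].

(* (V, ip, phi) is (an isometric copy of) the RKHS of k together with its
   canonical feature map phi x = k(x, .): V is a Hilbert space, the
   reproducing identity k x y = <phi x, phi y> holds, and the span of the
   feature vectors is dense. *)
Definition rkhs_presentation (R : realType) (T : Type) (k : T -> T -> R)
  (V : completeNormedModType R) (ip : V -> V -> R) (phi : T -> V) : Prop :=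
  inner_product ip /\
  (forall x y, k x y = ip (phi x) (phi y)) /\
  closure (feature_span phi) = setT.

Definition mixed_partial00 (R : realType) (h : R -> R -> R) (d : R) : Prop :=
  (\forall l \near (0 : R), derivable (h l) 0 1) /\
  derivable (fun l => derive1 (h l) 0) 0 1 /\
  derive1 (fun l => derive1 (h l) 0) 0 = d.

(* Main.v *)
Require Import Defs.
From HB Require Import structures.
From mathcomp Require Import all_boot all_order all_algebra.
From mathcomp Require Import all_classical all_reals all_analysis.
Import Order.TTheory GRing.Theory Num.Theory.
Import numFieldNormedType.Exports.
Local Open Scope classical_set_scope.
Local Open Scope ring_scope.

Lemma shift_der (R : realType) (g : R -> R) (s : R) :
  derivable (fun l => g (s + l)) 0 1 ->
  derivable g s 1 /\ derive1 g s = derive1 (fun l => g (s + l)) 0.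
Proof.
move=> D; split.
  move: D; rewrite /derivable.
  have -> : (fun h : R => h^-1 *: ((g \o shift s) (h *: 1) - g s)) =
    (fun h => h^-1 *: (((fun l => g (s + l)) \o shift 0) (h *: 1) - (fun l => g (s+l)) 0)).
    by apply/funext => h /=; rewrite addr0 [s + _]addrC addr0.
  by [].
rewrite /derive1.
have -> : (fun h : R => h^-1 *: (g (h + s) - g s)) =
    (fun h => h^-1 *: ((fun l => g (s + l)) (h + 0) - (fun l => g (s+l)) 0)).
  by apply/funext => h /=; rewrite !addr0 [h + s]addrC.
by [].
Qed.

Arguments shift_der {R g s}.

Lemma lipish (R : realType) (g : R -> R) (a b c : R) : a <= b ->
  (forall x, a <= x <= b -> derivable g x 1 /\ `|derive1 g x| <= c) ->
  `|g b - g a| <= c * (b - a).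
Proof.
move=> ab H.
have cont : {within `[a, b], continuous g}.
  apply: derivable_within_continuous => x; rewrite in_itv /= => /H [] //.
have dd : forall x, x \in `]a, b[%R -> is_derive x 1 g (derive1 g x).
  move=> x; rewrite in_itv /= => /andP[ax xb].
  have [dx _] := H x (introT andP (conj (ltW ax) (ltW xb))).
  rewrite derive1E; exact: derivableP.
have [x xab ->] := MVT_segment ab dd cont.
move: xab; rewrite in_itv /= => /H [_ hx].
rewrite normrM [`|b - a|]ger0_norm ?subr_ge0 //. by apply: ler_wpM2r; rewrite ?subr_ge0.
Qed.

Lemma derive1_shift (R : realType) (g : R -> R) (s : R) :
  derive1 g s = derive1 (fun l => g (s + l)) 0.
Proof.
rewrite /derive1.
have -> : (fun h : R => h^-1 *: (g (h + s) - g s)) =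
    (fun h => h^-1 *: ((fun l => g (s + l)) (h + 0) - (fun l => g (s+l)) 0)).
  by apply/funext => h /=; rewrite !addr0 [h + s]addrC.
by [].
Qed.

Lemma rect (R : realType) (f : R -> R -> R) (T c : R) : 0 <= T ->
 (forall s t, 0 <= s <= T -> 0 <= t <= T ->
   derivable (fun m => f s (t + m)) 0 1 /\
   derivable (fun l => derive1 (fun m => f (s + l) (t + m)) 0) 0 1 /\
   `|derive1 (fun l => derive1 (fun m => f (s + l) (t + m)) 0) 0| <= c) ->
 `|f T T - f 0 T - (f T 0 - f 0 0)| <= c * T * T.
Proof.
move=> T0 H.
have E : forall s t, derive1 (f s) t = derive1 (fun m => f s (t + m)) 0.
  by move=> s t; apply: derive1_shift.
have step1 : forall t, 0 <= t <= T ->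
    `|derive1 (f T) t - derive1 (f 0) t| <= c * (T - 0).
  move=> t tT; apply: (@lipish R (fun s => derive1 (f s) t) 0 T c T0).
  move=> s sT.
  have [_ [D1 D2]] := H s t sT tT.
  have Ef : (fun l => derive1 (fun m => f (s + l) (t + m)) 0) =
            (fun l => (fun s => derive1 (f s) t) (s + l)).
    by apply/funext => l /=; rewrite E.
  rewrite Ef in D1 D2.
  have [D3 D4] := @shift_der R (fun s => derive1 (f s) t) s D1.
  split; first exact: D3.
  rewrite D4; exact: D2.
have := @lipish R (fun t => f T t - f 0 t) 0 T (c * (T - 0)) T0.
move=> L; have -> : c * T * T = c * (T - 0) * (T - 0) by rewrite !subr0.
apply: L.
move=> t tT.
have lT : 0 <= T <= T by rewrite T0 le_refl.
have l0 : (0:R) <= 0 <= T by rewrite T0 le_refl.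
have [DT _] := H T t lT tT.
have [D0 _] := H 0 t l0 tT.
have [DT' _] := @shift_der R (f T) t DT.
have [D0' _] := @shift_der R (f 0) t D0.
split.
  exact: (derivableB DT' D0').
have -> : derive1 (fun t => f T t - f 0 t) t = derive1 (f T) t - derive1 (f 0) t.
  rewrite !derive1E.
  exact: (deriveB DT' D0').
have := step1 t tT; rewrite subr0; exact.
Qed.

Theorem lemmaA3 (R : realType) (X : Type) (k' : X -> X -> R) (Bk : R)
  (H : completeNormedModType R) (ip : H -> H -> R) (phi : X -> H)
  (K : H -> H -> R)
  (HK : completeNormedModType R) (ipK : HK -> HK -> R) (Phi : H -> HK)
  (C : R) :
  is_kernel k' ->
  (forall x, k' x x <= Bk ^+ 2) ->
  rkhs_presentation k' ip phi ->
  is_kernel K ->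
  rkhs_presentation K ipK Phi ->
  0 <= C ->
  (forall u v e : H, `|u| <= Bk -> `|v| <= Bk -> `|e| = 1 ->
     exists d : R,
       mixed_partial00 (fun l m : R => K (u + l *: e) (v + m *: e)) d /\
       `|d| <= C ^+ 2) ->
  forall u v : H, `|u| <= Bk -> `|v| <= Bk ->
    `|Phi u - Phi v| <= C * `|u - v|.
Proof.
Proof.
move=> _ _ _ [Ksym _] [[ipsym [iplin ipn]] [Krep _]] C0 Hyp u v uB vB.
have ip0 : forall z, ipK 0 z = 0.
  move=> z; have := iplin 1 0 0 z; rewrite scaler0 addr0 mul1r => E.
  by apply: (addrI (ipK 0 z)); rewrite addr0 -E.
have ipB : forall x y z, ipK (x - y) z = ipK x z - ipK y z.
  move=> x y z; have := iplin (-1) y 0 z; rewrite addr0 ip0 addr0 scaleN1r mulN1r => E1.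
  by have := iplin 1 x (- y) z; rewrite scale1r mul1r E1.
have [uv|uv] := eqVneq u v.
  by rewrite uv !subrr !normr0 mulr0.
set T := `|u - v|.
have T0 : 0 < T by rewrite normr_gt0 subr_eq0.
set e := T^-1 *: (u - v).
have e1 : `|e| = 1.
  by rewrite /e normrZ ger0_norm ?invr_ge0 ?ltW // mulVf // gt_eqF.
pose f := fun s t : R => K (v + s *: e) (v + t *: e).
have vTe : v + T *: e = u.
  by rewrite /e scalerA mulfV ?gt_eqF // scale1r addrC subrK.
have v0e : v + 0 *: e = v by rewrite scale0r addr0.
have inB : forall s, 0 <= s <= T -> `|v + s *: e| <= Bk.
  move=> s /andP[s0 sT].
  have -> : v + s *: e = (1 - s / T) *: v + (s / T) *: u.
    rewrite /e scalerA scalerBr scalerBl scale1r.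
    by rewrite addrA addrAC.
  have a0 : 0 <= s / T by rewrite divr_ge0 // ltW.
  have a1 : s / T <= 1 by rewrite ler_pdivrMr // mul1r.
  apply: (le_trans (ler_normD _ _)).
  rewrite !normrZ !ger0_norm ?subr_ge0 //.
  apply: (le_trans (lerD (ler_wpM2l _ vB) (ler_wpM2l _ uB))); rewrite ?subr_ge0 //.
  by rewrite -mulrDl subrK mul1r.
  by rewrite invr_ge0 ltW.
have eq2 : `|Phi u - Phi v| ^+ 2 = f T T - f 0 T - (f T 0 - f 0 0).
  rewrite /f vTe v0e -ipn !Krep ipB ipsym ipB [ipK (Phi v) (Phi u - Phi v)]ipsym ipB.
  by rewrite [ipK (Phi u) (Phi v)]ipsym.
suff key : `|f T T - f 0 T - (f T 0 - f 0 0)| <= C ^+ 2 * T * T.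
  rewrite -ler_sqr ?nnegrE ?mulr_ge0 ?normr_ge0 // eq2 exprMn.
  apply: le_trans (ler_norm _) _; by rewrite [T ^+ 2]expr2 mulrA.
apply: (@rect R f T (C ^+ 2) (ltW T0)) => s t sT tT.
have [d [md dC]] := Hyp _ _ _ (inB s sT) (inB t tT) e1.
have Ef : (fun l m : R => K (v + s *: e + l *: e) (v + t *: e + m *: e)) =
          (fun l m => f (s + l) (t + m)).
  by apply/funext => l; apply/funext => m; rewrite /f !scalerDl !addrA.
rewrite Ef in md.
case: md => [nd [Dd dE]].
split.
  have := nbhs_singleton nd; rewrite /= addr0; exact.
by split => //; rewrite dE.
Qed.
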